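(* Let $\alpha$ be an algebraic number, $K=\mathbb{Q}(\alpha)$, and let $f\in\mathbb{Q}[t]$ be the (monic) minimal polynomial of $\alpha$ over $\mathbb{Q}$. Let $X=\{x_1,\ldots,x_n\}$ be variables, $S=K[X]$ and $T=\mathbb{Q}[X,t]$. Fix a global monomial ordering $\succ_1$ on the monomials in $X$, and let $\succ_K=(\succ_1,\succ)$ be the product ordering on the monomials in $X,t$, where $\succ$ is the global (degree) ordering on monomials in $t$; i.e. $X^a t^b\succ_K X^{a'}t^{b'}$ iff $X^a\succ_1 X^{a'}$, or $a=a'$ and $b>b'$. Let $g_1(X,t),\ldots,g_s(X,t)\in T$, let $I\subseteq S$ be the ideal generated by $g_1(X,\alpha),\ldots,g_s(X,\alpha)$, and let $\widetilde I\subseteq T$ be the ideal generated by $g_1(X,t),\ldots,g_s(X,t), f$. Let $\widetilde G$ be the reduced Gröbner basis of $\widetilde I$ with respect to $\succ_K$. Then the set $\{\,g(X,\alpha) : g\in \widetilde G\setminus\{f\}\,\}$, obtained by substituting $t=\alpha$ into the elements of $\widetilde G$ other than $f$, is the reduced Gröbner basis of $I$ with respect to $\succ_1$.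
   Context: A reduced Gröbner basis is a Gröbner basis $G$ whose elements have leading coefficient $1$, such that for each $g\in G$ no term of $g$ is divisible by the leading monomial of any element of $G\setminus\{g\}$ (the leading monomial of $g$ not divisible by that of any other element). Gröbner bases over $K$ in $S=K[X]$ are with respect to $\succ_1$ and use coefficients in the field $K$. *)

(* Defs.v *)
From HB Require Import structures.
From mathcomp Require Import all_boot all_order all_algebra all_field.
From mathcomp Require Import mpoly.
Set Implicit Arguments. Unset Strict Implicit. Unset Printing Implicit Defensive.
Import GRing.Theory Num.Theory.
Local Open Scope ring_scope.

(* [lt m1 m2] reads  m1 "is smaller than" m2  (i.e. m2 ≻ m1). *)
Definition monomial_order (n : nat) (lt : rel 'X_{1..n}) : Prop :=
  [/\ (forall m, ~~ lt m m),
      (forall m1 m2 m3, lt m1 m2 -> lt m2 m3 -> lt m1 m3),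
      (forall m1 m2, m1 != m2 -> lt m1 m2 || lt m2 m1),
      (forall m1 m2 m, lt m1 m2 -> lt (mnm_add m1 m) (mnm_add m2 m)) &
      (forall m, m != mnm0 -> lt mnm0 m)].

(* the X-part of a monomial in X = x_1..x_n and t (t is the last variable) *)
Definition mX (n : nat) (m : 'X_{1..n.+1}) : 'X_{1..n} :=
  [multinom m (widen_ord (leqnSn n) i) | i < n].
Definition mt (n : nat) (m : 'X_{1..n.+1}) : nat := m ord_max.

Definition prod_order (n : nat) (lt1 : rel 'X_{1..n}) : rel 'X_{1..n.+1} :=
  fun m1 m2 => lt1 (mX m1) (mX m2) || ((mX m1 == mX m2) && (mt m1 < mt m2)%N).

Section Groebner.
Context (R : fieldType) (n : nat) (lt : rel 'X_{1..n}).

Definition is_LM (p : {mpoly R[n]}) (m : 'X_{1..n}) : Prop :=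
  m \in msupp p /\ (forall m', m' \in msupp p -> m' != m -> lt m' m).

Definition coefs_in (C : R -> Prop) (p : {mpoly R[n]}) : Prop :=
  forall m, m \in msupp p -> C p@_m.

Definition in_ideal (C : R -> Prop) (gs : seq {mpoly R[n]}) (p : {mpoly R[n]}) : Prop :=
  exists hs : seq {mpoly R[n]},
    [/\ size hs = size gs, (forall h, h \in hs -> coefs_in C h) &
        p = \sum_(i < size gs) hs`_i * gs`_i].

Definition is_groebner (C : R -> Prop) (I : {mpoly R[n]} -> Prop)
    (G : seq {mpoly R[n]}) : Prop :=
  (forall g, g \in G -> [/\ g != 0, coefs_in C g & I g]) /\
  (forall p, I p -> p != 0 ->
     exists g mg mp, [/\ g \in G, is_LM g mg, is_LM p mp & lem mg mp]).

Definition is_reduced_groebner (C : R -> Prop) (I : {mpoly R[n]} -> Prop)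
    (G : seq {mpoly R[n]}) : Prop :=
  is_groebner C I G /\
  (forall g, g \in G ->
     (exists mg, is_LM g mg /\ g@_mg = 1) /\
     (forall g' mg', g' \in G -> g' != g -> is_LM g' mg' ->
        forall m, m \in msupp g -> ~~ lem mg' m)).
End Groebner.

Definition is_subfield (P : algC -> Prop) : Prop :=
  [/\ P 1, (forall x y, P x -> P y -> P (x - y)),
      (forall x y, P x -> P y -> P (x * y)) & (forall x, P x -> P x^-1)].

Definition in_Qadj (alpha : algC) (x : algC) : Prop :=
  forall P, is_subfield P -> P alpha -> P x.

Definition subst_t (n : nat) (alpha : algC) (g : {mpoly rat[n.+1]}) : {mpoly algC[n]} :=
  comp_mpoly [tuple (match unlift ord_max i with
                     | Some j => 'X_j | None => alpha%:MP end) | i < n.+1]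
             (map_mpoly (fun c : rat => ratr c) g).

Definition poly_in_t (n : nat) (f : {poly rat}) : {mpoly rat[n.+1]} :=
  (map_poly (fun c : rat => c%:MP) f).['X_ord_max].

(* Main.v *)
Require Import Defs.
From HB Require Import structures.
From mathcomp Require Import all_boot all_order all_algebra all_field.
From mathcomp Require Import mpoly.
Import GRing.Theory Num.Theory.
Local Open Scope ring_scope.
From mathcomp Require Import zify ring.

Module Aux.
Set Implicit Arguments. Unset Strict Implicit. Unset Printing Implicit Defensive.
Notation mX := Defs.mX.
Notation mt := Defs.mt.

Section Alg.
Variables (alpha : algC) (f : {poly rat}).
Hypothesis f_monic : f \is monic.
Hypothesis f_root : root (map_poly ratr f) alpha.
Hypothesis f_min : forall q : {poly rat}, root (map_poly ratr q) alpha -> f %| q.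

Definition ev (q : {poly rat}) : algC := (map_poly ratr q).[alpha].

Lemma evD p q : ev (p + q) = ev p + ev q.
Proof. by rewrite /ev rmorphD hornerD. Qed.
Lemma evB p q : ev (p - q) = ev p - ev q.
Proof. by rewrite /ev rmorphB hornerD hornerN. Qed.
Lemma evM p q : ev (p * q) = ev p * ev q.
Proof. by rewrite /ev rmorphM hornerM. Qed.
Lemma evC c : ev c%:P = ratr c.
Proof. by rewrite /ev map_polyC hornerC. Qed.
Lemma evX : ev 'X = alpha.
Proof. by rewrite /ev map_polyX hornerX. Qed.
Lemma evXn k : ev 'X^k = alpha ^+ k.
Proof. by rewrite /ev map_polyXn hornerXn. Qed.
Lemma evZ c p : ev (c *: p) = ratr c * ev p.
Proof. by rewrite -mul_polyC evM evC. Qed.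
Lemma ev_f : ev f = 0.
Proof. exact/eqP. Qed.

Lemma f_neq0 : f != 0.
Proof. by apply: monic_neq0. Qed.

Lemma ev0_dvd q : ev q = 0 -> f %| q.
Proof. by move=> h; apply: f_min; apply/eqP. Qed.

Lemma ev0_small q : ev q = 0 -> (size q < size f)%N -> q = 0.
Proof.
move=> /ev0_dvd hd hs; apply/eqP; apply/negPn/negP => q0.
by have := dvdp_leq q0 hd; rewrite leqNgt hs.
Qed.

Lemma dvd_f d : d %| f -> ev d != 0 -> size d = 1%N.
Proof.
move=> /dvdpP [k fk] hd.
have : ev k * ev d = 0 by rewrite -evM -fk ev_f.
move/eqP; rewrite mulf_eq0 (negbTE hd) orbF => /eqP /ev0_dvd hk.
have k0 : k != 0 by apply: contraNneq f_neq0 => k0; rewrite fk k0 mul0r.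
have d0 : d != 0 by apply: contraNneq f_neq0 => d0; rewrite fk d0 mulr0.
have := dvdp_leq k0 hk; rewrite fk size_mul //.
have := size_poly_gt0 d; rewrite d0 => hd1.
have := size_poly_gt0 k; rewrite k0 => hk1.
move=> H; apply/eqP; rewrite eqn_leq hd1 andbT.
move: H hd1 hk1; case: (size k) => // sk; case: (size d) => // sd.
move=> H _ _; apply/eqP; move: H; rewrite !addSn !addnS /=; lia.
Qed.

Lemma bezout_ev q : ev q != 0 -> exists u, ev u * ev q = 1.
Proof.
move=> hq.
have : coprimep f q.
  apply/coprimepP => d df dq.
  rewrite -size_poly_eq1; apply/eqP; apply: dvd_f => //.
  apply/negP => /eqP /ev0_dvd fd.
  move: dq => /(dvdp_trans fd) /dvdpP [w qe].
  by move: hq; rewrite qe evM ev_f mulr0 eqxx.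
case/Bezout_eq1_coprimepP => -[u v] /= e.
exists v; rewrite -evM; have := congr1 ev e.
rewrite evD !evM ev_f mulr0 add0r => ->. by rewrite /ev rmorph1 hornerC.
Qed.


Lemma subfield0 (P : algC -> Prop) : is_subfield P -> P 0.
Proof. by case=> h1 hB _ _; rewrite -(subrr 1); apply: hB. Qed.
Lemma subfieldN (P : algC -> Prop) x : is_subfield P -> P x -> P (- x).
Proof. move=> hP hx; rewrite -sub0r; case: (hP) => _ hB _ _; apply: hB => //; exact: subfield0. Qed.
Lemma subfieldD (P : algC -> Prop) x y : is_subfield P -> P x -> P y -> P (x + y).
Proof.
move=> hP hx hy; rewrite -(opprK y); case: (hP) => _ hB _ _; apply: hB => //.
exact: subfieldN.
Qed.
Lemma subfield_nat (P : algC -> Prop) k : is_subfield P -> P k%:R.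
Proof.
move=> hP; elim: k => [|k ih]; first exact: subfield0.
by rewrite -addn1 natrD; apply: subfieldD => //; case: hP.
Qed.
Lemma subfield_int (P : algC -> Prop) (z : int) : is_subfield P -> P z%:~R.
Proof.
move=> hP; case: z => k; first exact: subfield_nat.
by rewrite NegzE mulrNz; apply: subfieldN => //; apply: subfield_nat.
Qed.
Lemma subfield_rat (P : algC -> Prop) c : is_subfield P -> P (ratr c).
Proof.
move=> hP; rewrite /ratr; case: (hP) => _ _ hM hV; apply: hM.
  exact: subfield_int.
by apply: hV; apply: subfield_int.
Qed.

Lemma in_Qadj_ev q : in_Qadj alpha (ev q).
Proof.
move=> P hP ha; elim/poly_ind: q => [|q c ih].
  by rewrite /ev rmorph0 horner0; apply: subfield0.
rewrite evD evM evX evC; apply: subfieldD => //; last exact: subfield_rat.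
by case: hP => _ _ hM _; apply: hM.
Qed.

Lemma in_Qadj_evP x : in_Qadj alpha x -> exists q, x = ev q.
Proof.
move=> hx; apply: (hx (fun y => exists q, y = ev q)); last by exists 'X; rewrite evX.
split.
- by exists 1; rewrite /ev rmorph1 hornerC.
- by move=> _ _ [p ->] [q ->]; exists (p - q); rewrite evB.
- by move=> _ _ [p ->] [q ->]; exists (p * q); rewrite evM.
- move=> _ [q ->]; have [q0|q0] := eqVneq (ev q) 0.
    by exists 0; rewrite q0 invr0 /ev rmorph0 horner0.
  have [u hu] := bezout_ev q0; exists u.
  by apply: (mulIf q0); rewrite mulVf.
Qed.

End Alg.



Section Mono.
Variable n : nat.

Definition mk (c : 'X_{1..n}) (e : nat) : 'X_{1..n.+1} :=
  [multinom (if unlift ord_max i is Some j then c j else e) | i < n.+1].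

Lemma widen_lift (j : 'I_n) : widen_ord (leqnSn n) j = lift ord_max j.
Proof. by apply: val_inj; rewrite /= /bump leqNgt ltn_ord. Qed.

Lemma unlift_widen (j : 'I_n) : unlift ord_max (widen_ord (leqnSn n) j) = Some j.
Proof. by rewrite widen_lift liftK. Qed.

Lemma mXE (m : 'X_{1..n.+1}) j : mX m j = m (widen_ord (leqnSn n) j).
Proof. by rewrite /mX mnmE. Qed.

Lemma mX_mk c e : mX (mk c e) = c.
Proof. by apply/mnmP => j; rewrite mXE /mk mnmE unlift_widen. Qed.

Lemma mt_mk c e : mt (mk c e) = e.
Proof. by rewrite /mt /mk mnmE unlift_none. Qed.

Lemma mkK m : mk (mX m) (mt m) = m.
Proof.
apply/mnmP => i; rewrite /mk mnmE; case: unliftP => [j ->|->] //.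
by rewrite mXE widen_lift.
Qed.

Lemma mk_eq m c e : (m == mk c e) = (mX m == c) && (mt m == e).
Proof.
apply/eqP/andP => [->|[/eqP <- /eqP <-]]; last by rewrite mkK.
by rewrite mX_mk mt_mk.
Qed.

Lemma mXD (m1 m2 : 'X_{1..n.+1}) : mX (m1 + m2)%MM = (mX m1 + mX m2)%MM.
Proof. by apply/mnmP => j; rewrite mnmDE !mXE mnmDE. Qed.

Lemma mtD (m1 m2 : 'X_{1..n.+1}) : mt (m1 + m2)%MM = (mt m1 + mt m2)%N.
Proof. by rewrite /mt mnmDE. Qed.

Lemma mkD a b c e : (mk a b + mk c e)%MM = mk (a + c)%MM (b + e).
Proof. by rewrite -[LHS]mkK mXD mtD !mX_mk !mt_mk. Qed.

Lemma mX0 : mX (0%MM : 'X_{1..n.+1}) = 0%MM.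
Proof. by apply/mnmP => j; rewrite mXE !mnm0E. Qed.
Lemma mt0 : mt (0%MM : 'X_{1..n.+1}) = 0%N.
Proof. by rewrite /mt mnm0E. Qed.

Lemma lem_mXmt (m1 m2 : 'X_{1..n.+1}) : (m1 <= m2)%MM = (mX m1 <= mX m2)%MM && (mt m1 <= mt m2)%N.
Proof.
apply/mnm_lepP/andP => [h|[/mnm_lepP h1 h2] i].
  split; last exact: h.
  by apply/mnm_lepP => j; rewrite !mXE.
case: (unliftP ord_max i) => [j ->|->] //.
by rewrite -widen_lift -!mXE.
Qed.

End Mono.


Section Subst.
Variables (alpha : algC) (n : nat).
Local Notation subst := (@subst_t n alpha).

Lemma substE g : subst g = comp_mpoly [tuple (match unlift ord_max i with
                     | Some j => 'X_j | None => alpha%:MP end) | i < n.+1]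
             (map_mpoly ratr g).
Proof. by []. Qed.

Lemma substD p q : subst (p + q) = subst p + subst q.
Proof. by rewrite !substE !raddfD. Qed.
Lemma substB p q : subst (p - q) = subst p - subst q.
Proof. by rewrite !substE !raddfB. Qed.
Lemma substM p q : subst (p * q) = subst p * subst q.
Proof. by rewrite !substE !rmorphM. Qed.
Lemma subst0 : subst 0 = 0.
Proof. by rewrite !substE !raddf0. Qed.
Lemma subst_sum I (r : seq I) (P : pred I) F :
  subst (\sum_(i <- r | P i) F i) = \sum_(i <- r | P i) subst (F i).
Proof. exact: (big_morph _ substD subst0). Qed.

Lemma substZX c m : subst (c *: 'X_[m]) = (ratr c * alpha ^+ mt m) *: 'X_[mX m].
Proof.
rewrite substE map_mpolyZ map_mpolyX comp_mpolyZ comp_mpolyX big_ord_recr /=.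
rewrite tnth_mktuple unlift_none mpolyXE_id -scalerA mulrC -rmorphXn /= mul_mpolyC.
congr (_ *: (_ *: _)); apply: eq_bigr => j _.
by rewrite tnth_mktuple unlift_widen mXE.
Qed.


Lemma substX g : subst g = \sum_(m <- msupp g) (ratr g@_m * alpha ^+ mt m) *: 'X_[mX m].
Proof. by rewrite {1}(mpolyE g) subst_sum; apply: eq_bigr => m _; rewrite substZX. Qed.

Lemma mcoeff_subst g c :
  (subst g)@_c = \sum_(m <- msupp g | mX m == c) ratr g@_m * alpha ^+ mt m.
Proof.
rewrite substX raddf_sum /= [RHS]big_mkcond /=; apply: eq_bigr => m _.
by rewrite mcoeffZ mcoeffX; case: eqP => _; rewrite ?mulr1 ?mulr0.
Qed.

Definition colq (g : {mpoly rat[n.+1]}) (c : 'X_{1..n}) : {poly rat} :=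
  \sum_(m <- msupp g | mX m == c) g@_m *: 'X^(mt m).

Lemma ev_colq g c : ev alpha (colq g c) = (subst g)@_c.
Proof.
rewrite mcoeff_subst /colq /ev rmorph_sum horner_sum; apply: eq_bigr => m _.
rewrite -mul_polyC rmorphM /= map_polyC map_polyXn hornerM hornerC hornerXn //.
Qed.

Lemma coef_colq g c e : (colq g c)`_e = g@_(mk c e).
Proof.
rewrite /colq coef_sum big_mkcond /=.
have -> : g@_(mk c e) = (\sum_(m <- msupp g) g@_m *: 'X_[m])@_(mk c e) by rewrite -mpolyE.
rewrite raddf_sum /=; apply: eq_bigr => m _.
rewrite coefZ coefXn mcoeffZ mcoeffX eq_sym mk_eq.
by rewrite [c == _]eq_sym [e == _]eq_sym; case: (mX m == c) => //=; rewrite mulr0.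
Qed.

End Subst.

Section PolyT.
Variable n : nat.
Local Notation PT := (poly_in_t n).

Lemma PTE q : PT q = (map_poly (fun c : rat => c%:MP) q).['X_ord_max].
Proof. by []. Qed.
Lemma PTD p q : PT (p + q) = PT p + PT q.
Proof. by rewrite !PTE rmorphD hornerD. Qed.
Lemma PTB p q : PT (p - q) = PT p - PT q.
Proof. by rewrite !PTE rmorphB hornerD hornerN. Qed.
Lemma PTM p q : PT (p * q) = PT p * PT q.
Proof. by rewrite !PTE rmorphM hornerM. Qed.
Lemma PT0 : PT 0 = 0.
Proof. by rewrite PTE rmorph0 horner0. Qed.
Lemma PTC c : PT c%:P = c%:MP.
Proof. by rewrite PTE map_polyC hornerC. Qed.
Lemma PTX : PT 'X = 'X_ord_max.
Proof. by rewrite PTE map_polyX hornerX. Qed.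
Lemma PT1 : PT 1 = 1.
Proof. by rewrite PTC. Qed.

Lemma mk00 : mk (0%MM : 'X_{1..n}) 0 = 0%MM.
Proof. by apply/mnmP => i; rewrite /mk !mnmE; case: unlift => // j; rewrite mnmE. Qed.

Lemma mk0U k : mk (0%MM : 'X_{1..n}) k = (U_(ord_max) *+ k)%MM.
Proof.
apply/mnmP => i; rewrite /mk mnmE mulmnE mnm1E; case: unliftP => [j ->|->].
  by rewrite mnmE (negbTE (neq_lift _ _)).
by rewrite eqxx mul1n.
Qed.

Lemma PTXn k : PT 'X^k = 'X_[mk 0 k].
Proof. by rewrite PTE map_polyXn hornerXn mpolyXn mk0U. Qed.

Lemma XmkPT m : 'X_[m] = 'X_[mk (mX m) 0] * PT 'X^(mt m).
Proof. by rewrite PTXn -mpolyXD mkD addm0 add0n mkK. Qed.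

Lemma XP_E a q : 'X_[mk a 0] * PT q = \sum_(i < size q) q`_i *: 'X_[mk a i].
Proof.
rewrite {1}(_ : q = \sum_(i < size q) q`_i *: 'X^i); last by rewrite -poly_def coefK.
rewrite (big_morph _ PTD PT0) mulr_sumr; apply: eq_bigr => i _.
rewrite -mul_polyC PTM PTC PTXn mul_mpolyC -scalerAr -mpolyXD mkD addm0 add0n //.
Qed.

Lemma mcoeff_XP a q m :
  ('X_[mk a 0] * PT q)@_m = if mX m == a then q`_(mt m) else 0.
Proof.
rewrite XP_E raddf_sum /=.
under eq_bigr => i _ do rewrite mcoeffZ mcoeffX eq_sym mk_eq.
case: eqP => _ /=; last by rewrite big1 // => i _; rewrite mulr0.
have := congr1 (fun p : {poly rat} => p`_(mt m)) (coefK q).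
rewrite poly_def coef_sum /= => <-; apply: eq_bigr => i _.
by rewrite coefZ coefXn eq_sym.
Qed.

Lemma mcoeff_PT q m : (PT q)@_m = if mX m == 0%MM then q`_(mt m) else 0.
Proof. by rewrite -mcoeff_XP mk00 mpolyX0 mul1r. Qed.

Lemma substC alpha c : subst_t alpha (c%:MP : {mpoly rat[n.+1]}) = (ratr c)%:MP.
Proof.
have -> : (c%:MP : {mpoly rat[n.+1]}) = c *: 'X_[0%MM] by rewrite mpolyX0 -alg_mpolyC.
by rewrite substZX mt0 mX0 expr0 mulr1 mpolyX0 alg_mpolyC.
Qed.

Lemma substXmax alpha : subst_t alpha ('X_ord_max : {mpoly rat[n.+1]}) = alpha%:MP.
Proof.
rewrite -[ 'X_ord_max]scale1r substZX /mt mnm1E eqxx expr1 rmorph1 mul1r.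
have -> : mX (U_(ord_max) : 'X_{1..n.+1}) = 0%MM.
  apply/mnmP => j; rewrite mXE mnm1E mnm0E widen_lift.
  by rewrite (negbTE (neq_lift _ _)).
by rewrite mpolyX0 alg_mpolyC.
Qed.

Lemma subst_PT alpha q : subst_t alpha (PT q) = (ev alpha q)%:MP.
Proof.
elim/poly_ind: q => [|q c ih].
  by rewrite PT0 subst0 /ev rmorph0 horner0.
rewrite PTD PTM PTC PTX substD substM ih substC substXmax evD evM evX evC.
by rewrite mpolyCD -mpolyCM.
Qed.

Lemma subst_XP alpha a q : subst_t alpha ('X_[mk a 0] * PT q) = ev alpha q *: 'X_[a].
Proof.
by rewrite substM subst_PT -[ 'X_[_]]scale1r substZX mt_mk mX_mk rmorph1 expr0 mulr1 scale1r mulrC mul_mpolyC.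
Qed.

End PolyT.


Section Ideal.
Variables (R : fieldType) (k : nat) (gs : seq {mpoly R[k]}).
Local Notation J := (in_ideal (fun _ => True) gs).

Lemma J0 : J 0.
Proof.
exists (nseq (size gs) 0); split; first by rewrite size_nseq.
  by [].
by rewrite big1 // => i _; rewrite nth_nseq if_same mul0r.
Qed.

Lemma J_add p q : J p -> J q -> J (p + q).
Proof.
move=> [hp [sp _ ep]] [hq [sq _ eq]].
exists (mkseq (fun i => hp`_i + hq`_i) (size gs)); split; first by rewrite size_mkseq.
  by [].
rewrite ep eq -big_split /=; apply: eq_bigr => i _.
by rewrite nth_mkseq // mulrDl.
Qed.

Lemma J_mul r p : J p -> J (r * p).
Proof.
move=> [hp [sp _ ep]].
exists (mkseq (fun i => r * hp`_i) (size gs)); split; first by rewrite size_mkseq.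
  by [].
rewrite ep mulr_sumr; apply: eq_bigr => i _.
by rewrite nth_mkseq // mulrA.
Qed.

Lemma J_sub p q : J p -> J q -> J (p - q).
Proof.
move=> hp hq; apply: J_add => //; rewrite -mulN1r; exact: J_mul.
Qed.

Lemma J_gen i : (i < size gs)%N -> J gs`_i.
Proof.
move=> hi; exists (mkseq (fun j => (j == i)%:R) (size gs)); split.
- by rewrite size_mkseq.
- by [].
rewrite (bigD1 (Ordinal hi)) //= big1 ?addr0.
  by rewrite nth_mkseq // eqxx mul1r.
move=> j; rewrite -val_eqE /= => /negbTE hj.
by rewrite nth_mkseq // hj mul0r.
Qed.

End Ideal.

Section Orders.
Variables (n : nat) (lt1 : rel 'X_{1..n}).
Hypothesis lt1_order : monomial_order lt1.

Lemma lt1_irr m : ~~ lt1 m m.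
Proof. by case: lt1_order. Qed.
Lemma lt1_trans m1 m2 m3 : lt1 m1 m2 -> lt1 m2 m3 -> lt1 m1 m3.
Proof. by case: lt1_order => _ h _ _ _; apply: h. Qed.
Lemma lt1_not0 m : ~~ lt1 m 0%MM.
Proof.
have [->|m0] := eqVneq m 0%MM; first exact: lt1_irr.
apply/negP => h; case: lt1_order => _ _ _ _ /(_ m m0) h'.
by have := lt1_irr m; rewrite (lt1_trans h h').
Qed.

Lemma prod_irr m : ~~ prod_order lt1 m m.
Proof. by rewrite /prod_order (negbTE (lt1_irr _)) ltnn andbF. Qed.
Lemma prod_trans m1 m2 m3 :
  prod_order lt1 m1 m2 -> prod_order lt1 m2 m3 -> prod_order lt1 m1 m3.
Proof.
rewrite /prod_order => /orP[h1|/andP[/eqP e1 h1]] /orP[h2|/andP[/eqP e2 h2]].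
- by rewrite (lt1_trans h1 h2).
- by rewrite -e2 h1.
- by rewrite e1 h2.
- by rewrite e1 e2 eqxx (ltn_trans h1 h2) orbT.
Qed.

End Orders.

Lemma is_LM_uniq (R : fieldType) n (lt : rel 'X_{1..n}) (p : {mpoly R[n]}) m1 m2 :
  (forall m, ~~ lt m m) -> (forall a b c, lt a b -> lt b c -> lt a c) ->
  is_LM lt p m1 -> is_LM lt p m2 -> m1 = m2 :> 'X_{1..n}.
Proof.
move=> irr tr [i1 h1] [i2 h2]; apply/eqP/negP => /negP ne.
have a := h2 _ i1 ne; have b := h1 _ i2; rewrite eq_sym in b.
by have := irr m1; rewrite (tr _ _ _ a (b ne)).
Qed.

Lemma sum_single (T : eqType) (V : zmodType) (s : seq T) (P : pred T) (F : T -> V) x :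
  uniq s -> x \in s -> P x -> (forall m, m \in s -> P m -> m = x) ->
  \sum_(m <- s | P m) F m = F x.
Proof.
move=> us xs Px h; rewrite big_mkcond (bigD1_seq x) //= Px big1_seq ?addr0 //.
move=> m /andP[mx ms]; case: ifP => // Pm; exfalso.
by move: mx; rewrite (h m ms Pm) eqxx.
Qed.


Lemma lem0 n (m : 'X_{1..n}) : (m <= 0)%MM -> m = 0%MM.
Proof.
move/mnm_lepP => h; apply/mnmP => i; rewrite mnm0E; apply/eqP.
by rewrite -leqn0; have := h i; rewrite mnm0E.
Qed.

Lemma le0m' n (m : 'X_{1..n}) : (0 <= m)%MM.
Proof. by apply/mnm_lepP => i; rewrite mnm0E. Qed.

Section Main.
Variables (alpha : algC) (f : {poly rat}).
Hypothesis f_monic : f \is monic.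
Hypothesis f_root : root (map_poly ratr f) alpha.
Hypothesis f_min : forall q : {poly rat}, root (map_poly ratr q) alpha -> f %| q.
Variables (n : nat) (lt1 : rel 'X_{1..n}).
Hypothesis lt1_order : monomial_order lt1.
Variables (gs Gt : seq {mpoly rat[n.+1]}).
Hypothesis Gt_red : is_reduced_groebner (prod_order lt1) (fun _ => True)
              (in_ideal (fun _ => True) (rcons gs (poly_in_t n f))) Gt.

Local Notation lt := (prod_order lt1).
Local Notation fT := (poly_in_t n f).
Local Notation J := (in_ideal (fun _ => True) (rcons gs fT)).
Local Notation subst := (subst_t alpha).
Local Notation d := (size f).-1.

Lemma size_f : size f = d.+1.
Proof. by rewrite prednK // size_poly_gt0 (f_neq0 f_monic). Qed.

Lemma Jf : J fT.
Proof.
have := @J_gen _ _ (rcons gs fT) (size gs); rewrite size_rcons ltnSn nth_rcons ltnn eqxx.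
by apply.
Qed.

Lemma Jg i : (i < size gs)%N -> J gs`_i.
Proof.
move=> hi; have := @J_gen _ _ (rcons gs fT) i; rewrite size_rcons nth_rcons hi.
by apply; rewrite ltnS ltnW.
Qed.

Lemma mcoeff_fT m : fT@_m = if mX m == 0%MM then f`_(mt m) else 0.
Proof. exact: mcoeff_PT. Qed.

Lemma f_lead : f`_d = 1.
Proof. by move: f_monic => /monicP; rewrite /lead_coef. Qed.

Lemma LM_fT : is_LM lt fT (mk 0 d).
Proof.
split; first by rewrite mcoeff_msupp mcoeff_fT mX_mk eqxx mt_mk f_lead oner_neq0.
move=> m; rewrite mcoeff_msupp mcoeff_fT; have [e0|ne0] := eqVneq (mX m) 0%MM; last by rewrite eqxx.
move=> nz ne; rewrite /prod_order mX_mk e0 eqxx mt_mk /=; apply/orP; right.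
rewrite ltn_neqAle; apply/andP; split.
  by apply: contra ne => /eqP e; rewrite -[m]mkK e0 e.
by rewrite -ltnS -size_f; apply: contraNT nz => /negbTE; rewrite ltnNge => /negbFE /leq_sizeP ->.
Qed.

Lemma fT_neq0 : fT != 0.
Proof. by case: LM_fT => /[swap] _; apply: contraTneq => ->; rewrite msupp0. Qed.

Lemma subst_fT : subst fT = 0.
Proof. by rewrite subst_PT (ev_f f_root) mpolyC0. Qed.

Lemma Gmem g : g \in Gt -> [/\ g != 0, coefs_in (fun _ => True) g & J g].
Proof. by case: Gt_red => [[h _] _]; apply: h. Qed.

Lemma Ggb p : J p -> p != 0 ->
  exists g mg mp, [/\ g \in Gt, is_LM lt g mg, is_LM lt p mp & (mg <= mp)%MM].
Proof. by case: Gt_red => [[_ h] _]; apply: h. Qed.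

Lemma Gred g : g \in Gt ->
     (exists mg, is_LM lt g mg /\ g@_mg = 1) /\
     (forall g' mg', g' \in Gt -> g' != g -> is_LM lt g' mg' ->
        forall m, m \in msupp g -> ~~ (mg' <= m)%MM).
Proof. by case: Gt_red => _; apply. Qed.

Lemma LMu (p : {mpoly rat[n.+1]}) m1 m2 : is_LM lt p m1 -> is_LM lt p m2 -> m1 = m2.
Proof. by apply: is_LM_uniq; [apply: prod_irr | apply: prod_trans]. Qed.

Lemma LMu1 (p : {mpoly algC[n]}) m1 m2 : is_LM lt1 p m1 -> is_LM lt1 p m2 -> m1 = m2.
Proof. by apply: is_LM_uniq; [apply: lt1_irr | apply: lt1_trans]. Qed.

Lemma noDiv (h g : {mpoly rat[n.+1]}) mh mg : h \in Gt -> is_LM lt h mh -> g \in Gt -> is_LM lt g mg ->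
  (mg <= mh)%MM -> g = h.
Proof.
move=> hG hLM gG gLM le; apply/eqP/negP => /negP ne.
have [_ H] := Gred hG; have := H g mg gG ne gLM mh; rewrite le.
by case: hLM => hin _; move/(_ hin).
Qed.

Lemma high_zero (h : {mpoly rat[n.+1]}) mh e : is_LM lt h mh -> (mt mh < e)%N -> h@_(mk (mX mh) e) = 0.
Proof.
move=> [_ hl] he; apply/eqP; rewrite mcoeff_eq0; apply/negP => hin.
have ne : mk (mX mh) e != mh by apply: contraTneq he => <-; rewrite mt_mk ltnn.
have := hl _ hin ne; rewrite /prod_order mX_mk mt_mk (negbTE (lt1_irr lt1_order _)) eqxx /=.
by rewrite ltnNge (ltnW he).
Qed.

Lemma b0 (h : {mpoly rat[n.+1]}) mh : h \in Gt -> h != fT -> is_LM lt h mh -> mt mh = 0%N.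
Proof.
move=> hG hf hLM.
have [hnz _ hJ] := Gmem hG.
have [[mh1 [hLM1 hc1]] _] := Gred hG.
move: hc1; rewrite (LMu hLM1 hLM) => hc1.
pose a := mX mh; pose b := mt mh.
pose c := colq h a.
have cb : c`_b = 1 by rewrite coef_colq /a /b mkK.
have chi e : (b < e)%N -> c`_e = 0 by rewrite coef_colq => he; apply: high_zero.
have [evc|evc] := eqVneq (ev alpha c) 0.
  exfalso.
  have fc := ev0_dvd f_min evc.
  have c0 : c != 0 by apply/eqP => e; move: cb; rewrite e coef0 => /esym/eqP; rewrite oner_eq0.
  have sc : (size c <= b.+1)%N by apply/leq_sizeP => e he; apply: chi.
  have db : (d <= b)%N by have := dvdp_leq c0 fc; rewrite size_f => H /=; rewrite -ltnS; apply: leq_trans H sc.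
  have [g [mg [mp [gG gLM fLM le]]]] := Ggb Jf fT_neq0.
  move: le; rewrite (LMu fLM LM_fT) lem_mXmt mX_mk mt_mk => /andP[l1 l2].
  have mg0 := lem0 l1.
  have lgh : (mg <= mh)%MM by rewrite lem_mXmt mg0 le0m' /=; apply: leq_trans l2 db.
  have eg := noDiv hG hLM gG gLM lgh; subst g.
  have emg := LMu gLM hLM; subst mg.
  have ebd : b = d by apply/eqP; rewrite eqn_leq db andbT.
  have hD : h - fT != 0 by rewrite subr_eq0.
  have [g' [mg' [mp' [g'G g'LM DLM le']]]] := Ggb (J_sub hJ Jf) hD.
  have : mp' \in msupp (h - fT) by case: DLM.
  rewrite mcoeff_msupp mcoeffB mcoeff_fT => nz.
  have hmp' : mX mp' = 0%MM.
    apply/eqP; apply: contraNT nz => x0; rewrite (negbTE x0) subr0.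
    rewrite mcoeff_eq0; apply/negP => hin.
    have ne : mp' != mh by apply: contra x0 => /eqP ->; rewrite mg0.
    case: hLM => _ /(_ _ hin ne); rewrite /prod_order mg0 (negbTE (lt1_not0 lt1_order _)) /=.
    by rewrite (negbTE x0).
  have tmp' : (mt mp' < d)%N.
    rewrite ltnNge; apply: contra nz => hge; rewrite hmp' eqxx.
    have -> : mp' = mk (mX mh) (mt mp') by rewrite mg0 -hmp' mkK.
    move: hge; rewrite leq_eqVlt => /orP[/eqP ed|gd].
      rewrite mt_mk -ed f_lead (_ : mk (mX mh) d = mh) ?hc1 ?subrr //; by rewrite -ebd /b mkK.
    rewrite high_zero // ?mt_mk; last by rewrite -/b ebd.
    rewrite nth_default ?subrr // size_f //.
  have lg'h : (mg' <= mh)%MM.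
    move: le'; rewrite !lem_mXmt hmp' mg0 => /andP[/lem0 -> l4] /=.
    by rewrite le0m' /=; apply: ltnW; apply: leq_ltn_trans l4 _; rewrite -/b ebd.
  have eg' := noDiv hG hLM g'G g'LM lg'h; subst g'.
  have emg' := LMu g'LM hLM; subst mg'.
  move: le'; rewrite lem_mXmt => /andP[_ l3].
  by have := leq_ltn_trans l3 tmp'; rewrite -/b ebd ltnn.
have [u hu] := bezout_ev f_monic f_root f_min evc.
have : f %| u * c - 1.
  by apply: (ev0_dvd f_min); rewrite evB evM hu /ev rmorph1 hornerC subrr.
case/dvdpP => v hv.
pose X := ('X_[mk a 0] : {mpoly rat[n.+1]}).
pose h' := h - X * poly_in_t n c.
have h'c m : h'@_m = if mX m == a then 0 else h@_m.
  rewrite mcoeffB mcoeff_XP; case: eqP => [ea|]; last by rewrite subr0.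
  by rewrite coef_colq -ea mkK subrr.
pose Q := poly_in_t n u * h - X * poly_in_t n v * fT.
have e2 : poly_in_t n u * poly_in_t n c = poly_in_t n v * fT + 1.
  by rewrite -PTM -PTM -PT1 -PTD -hv subrK.
have QE : Q = X + poly_in_t n u * h'.
  rewrite /Q /h' mulrBr mulrCA e2; ring.
have supp_uh' m : m \in msupp (poly_in_t n u * h') -> lt1 (mX m) a.
  move/msuppM_le/allpairsP => [[m1 m2] /= [m1s m2s ->]].
  move: m1s; rewrite mcoeff_msupp mcoeff_PT.
  have [e10 _|ne10] := eqVneq (mX m1) 0%MM; last by rewrite eqxx.
  rewrite mXD e10 add0m.
  move: m2s; rewrite mcoeff_msupp h'c.
  have [//|ne2 nz2] := eqVneq (mX m2) a.
  have hin : m2 \in msupp h by rewrite mcoeff_msupp.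
  have ne : m2 != mh by apply: contra ne2 => /eqP ->.
  case: hLM => _ /(_ _ hin ne); rewrite /prod_order => /orP[//|/andP[e _]].
  by rewrite e in ne2.
have Qc : Q@_(mk a 0) = 1.
  rewrite QE mcoeffD mcoeffX eqxx.
  have -> : (poly_in_t n u * h')@_(mk a 0) = 0.
    apply/eqP; rewrite mcoeff_eq0; apply/negP => /supp_uh'.
    by rewrite mX_mk (negbTE (lt1_irr lt1_order _)).
  by rewrite addr0.
have QLM : is_LM lt Q (mk a 0).
  split; first by rewrite mcoeff_msupp Qc oner_neq0.
  move=> m; rewrite QE => /msuppD_le; rewrite mem_cat msuppX inE => /orP[/eqP -> |/supp_uh' hl].
    by rewrite eqxx.
  by rewrite /prod_order mX_mk hl.
have QJ : J Q by apply: J_sub; apply: J_mul => //; apply: Jf.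
have Qnz : Q != 0 by apply/eqP => e; move: Qc; rewrite e mcoeff0 => /esym/eqP; rewrite oner_eq0.
have [g [mg [mp [gG gLM QLM' le]]]] := Ggb QJ Qnz.
move: le; rewrite (LMu QLM' QLM) => le.
have lgh : (mg <= mh)%MM.
  move: le; rewrite !lem_mXmt mX_mk mt_mk => /andP[-> /=]; rewrite leqn0 => /eqP ->.
  by [].
have eg := noDiv hG hLM gG gLM lgh; subst g.
have emg := LMu gLM hLM; subst mg.
by move: le; rewrite lem_mXmt mt_mk leqn0 => /andP[_ /eqP].
Qed.

Lemma supp_subst (g : {mpoly rat[n.+1]}) c :
  c \in msupp (subst g) -> exists2 m, m \in msupp g & mX m = c.
Proof.
rewrite mcoeff_msupp mcoeff_subst => nz.
have [/hasP [m ms /eqP e]|nh] := boolP (has (fun m => mX m == c) (msupp g)).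
  by exists m.
by move: nz; rewrite big_hasC // eqxx.
Qed.

Lemma coefs_subst (g : {mpoly rat[n.+1]}) : coefs_in (in_Qadj alpha) (subst g).
Proof. by move=> c _; rewrite -ev_colq; apply: in_Qadj_ev. Qed.

Lemma LM_subst (h : {mpoly rat[n.+1]}) mh : is_LM lt h mh -> h@_mh = 1 -> mt mh = 0%N ->
  is_LM lt1 (subst h) (mX mh) /\ (subst h)@_(mX mh) = 1.
Proof.
move=> hLM hc ht.
have mhs : mh \in msupp h by case: hLM.
have one m : m \in msupp h -> mX m == mX mh -> m = mh.
  move=> ms /eqP e; apply/eqP/negP => /negP ne; case: hLM => _ /(_ m ms ne).
  by rewrite /prod_order e (negbTE (lt1_irr lt1_order _)) eqxx ht ltn0.
have c1 : (subst h)@_(mX mh) = 1.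
  rewrite mcoeff_subst (sum_single (P := fun m => mX m == mX mh) _ (msupp_uniq h) mhs (eqxx _) one).
  by rewrite hc rmorph1 mul1r ht expr0.
split => //; split; first by rewrite mcoeff_msupp c1 oner_neq0.
move=> c /supp_subst [m ms <-] ne.
have ne' : m != mh by apply: contra ne => /eqP ->.
case: hLM => _ /(_ m ms ne'); rewrite /prod_order => /orP[//|/andP[e _]].
by rewrite e in ne.
Qed.

Lemma subst_J P : J P -> in_ideal (in_Qadj alpha) (map subst gs) (subst P).
Proof.
move=> [hs [sz _ ->]].
exists (mkseq (fun i => subst hs`_i) (size gs)); split.
- by rewrite size_mkseq size_map.
- by move=> h /mapP [i _ ->]; apply: coefs_subst.
rewrite (big_morph _ (substD alpha (n:=n)) (subst0 alpha n)) size_rcons big_ord_recr /= nth_rcons ltnn eqxx.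
rewrite substM subst_fT mulr0 addr0 size_map.
apply: eq_bigr => i _; rewrite nth_mkseq // substM nth_rcons ltn_ord (nth_map 0) //.
Qed.

Lemma lift1 (h : {mpoly algC[n]}) : coefs_in (in_Qadj alpha) h -> exists H, subst H = h.
Proof.
move=> hc.
suff : forall s, {subset s <= msupp h} ->
    exists H, subst H = \sum_(c <- s) h@_c *: 'X_[c].
  by move/(_ (msupp h) (fun x y => y)) => [H e]; exists H; rewrite e -mpolyE.
elim => [|c s ih] sub; first by exists 0; rewrite subst0 big_nil.
have sub' : {subset s <= msupp h} by move=> x xs; apply: sub; rewrite inE xs orbT.
have [H eH] := ih sub'.
have [q eq] := in_Qadj_evP f_monic f_root f_min (hc c (sub c (mem_head c s))).
by exists ('X_[mk c 0] * poly_in_t n q + H); rewrite substD subst_XP eH big_cons eq.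
Qed.

Lemma lift_J p : in_ideal (in_Qadj alpha) (map subst gs) p -> exists P, J P /\ subst P = p.
Proof.
move=> [hs [sz hc ->]].
have : exists Hs : seq {mpoly rat[n.+1]},
    size Hs = size hs /\ forall i, (i < size hs)%N -> subst Hs`_i = hs`_i.
  elim: hs hc {sz} => [|h hs ih] hc; first by exists [::]; split => // i; rewrite ltn0.
  have [H eH] := lift1 (hc h (mem_head _ _)).
  have hc' : forall x, x \in hs -> coefs_in (in_Qadj alpha) x by move=> x xs; apply: hc; rewrite inE xs orbT.
  have [Hs [s1 e1]] := ih hc'.
  exists (H :: Hs); split; first by rewrite /= s1.
  by case => [_|i] //=; rewrite ltnS; apply: e1.
move=> [Hs [s1 e1]].
exists (\sum_(i < size gs) Hs`_i * gs`_i); split.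
  apply: big_ind; [exact: J0 | exact: J_add | move=> i _; apply: J_mul; apply: Jg].
  exact: ltn_ord.
rewrite (big_morph _ (substD alpha (n:=n)) (subst0 alpha n)) size_map; apply: eq_bigr => i _.
by rewrite substM e1 ?(nth_map 0) // sz size_map.
Qed.

Lemma reduce P : J P -> exists P',
  [/\ J P', subst P' = subst P & forall m, m \in msupp P' -> (mt m < d)%N].
Proof.
move=> JP.
pose Rm m := ('X_[mk (mX m) 0] : {mpoly rat[n.+1]}) * poly_in_t n ('X^(mt m) %/ f).
pose Sm m := ('X_[mk (mX m) 0] : {mpoly rat[n.+1]}) * poly_in_t n ('X^(mt m) %% f).
pose R := \sum_(m <- msupp P) P@_m *: Rm m.
pose S := \sum_(m <- msupp P) P@_m *: Sm m.
have PE : P = R * fT + S.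
  rewrite {1}(mpolyE P) /R /S mulr_suml -big_split /=; apply: eq_bigr => m _.
  rewrite {1}XmkPT {1}(divp_eq 'X^(mt m) f) PTD PTM /Rm /Sm -scalerAl -scalerDr.
  congr (_ *: _); ring.
exists S; split.
- have -> : S = P - R * fT by rewrite PE [R * fT + S]addrC addrK.
  by apply: J_sub => //; apply: J_mul; apply: Jf.
- rewrite [in RHS]PE substD substM subst_fT mulr0 add0r //.
move=> m; rewrite mcoeff_msupp; apply: contraR; rewrite -leqNgt => hm.
rewrite /S raddf_sum big1 //= => m' _; rewrite /Sm mcoeffZ mcoeff_XP.
case: ifP => _; last by rewrite mulr0.
rewrite nth_default ?mulr0 //.
have := ltn_modp 'X^(mt m') f; rewrite (f_neq0 f_monic) size_f ltnS => H.
exact: leq_trans H hm.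
Qed.

Lemma indep (P : {mpoly rat[n.+1]}) : (forall m, m \in msupp P -> (mt m < d)%N) ->
  forall m, m \in msupp P -> mX m \in msupp (subst P).
Proof.
move=> hP m ms; rewrite mcoeff_msupp -ev_colq; apply/eqP => e0.
have := ev0_small f_min e0; rewrite size_f ltnS.
have -> : (size (colq P (mX m)) <= d)%N.
  apply/leq_sizeP => e he; rewrite coef_colq; apply/eqP; rewrite mcoeff_eq0.
  by apply/negP => /hP; rewrite mt_mk ltnNge he.
move/(_ isT) => c0; move: ms; rewrite mcoeff_msupp.
by rewrite -(mkK m) -coef_colq c0 coef0 eqxx.
Qed.

Theorem main_thm : is_reduced_groebner lt1 (in_Qadj alpha)
    (in_ideal (in_Qadj alpha) (map subst gs))
    (map subst [seq g <- Gt | g != fT]).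
Proof.
have memT g : g \in map subst [seq g <- Gt | g != fT] ->
    exists h, [/\ g = subst h, h \in Gt & h != fT].
  by move/mapP => [h]; rewrite mem_filter => /andP[hf hG] ->; exists h.
have LMh h : h \in Gt -> h != fT -> exists mh, [/\ is_LM lt h mh, mt mh = 0%N,
    is_LM lt1 (subst h) (mX mh) & (subst h)@_(mX mh) = 1].
  move=> hG hf; have [[mh [hLM hc]] _] := Gred hG.
  have ht := b0 hG hf hLM; have [l1 l2] := LM_subst hLM hc ht.
  by exists mh.
split; first split.
- move=> g /memT [h [-> hG hf]]; have [mh [_ _ _ c1]] := LMh h hG hf.
  split; last by apply: subst_J; case: (Gmem hG).
    by apply/eqP => e; move: c1; rewrite e mcoeff0 => /esym/eqP; rewrite oner_eq0.
  exact: coefs_subst.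
- move=> p pI pnz.
  have [P [JP eP]] := lift_J pI.
  have [P' [JP' eP' hP']] := reduce JP.
  have P'nz : P' != 0 by apply: contra pnz => /eqP e; rewrite -eP -eP' e subst0.
  have [g [mg [mP [gG gLM PLM le]]]] := Ggb JP' P'nz.
  have gf : g != fT.
    apply/eqP => e; move: gLM le; rewrite e => gLM.
    rewrite (LMu gLM LM_fT) lem_mXmt mt_mk => /andP[_ l].
    have mPs : mP \in msupp P' by case: PLM.
    by have := hP' mP mPs; rewrite ltnNge l.
  have [mh [hLM ht sLM c1]] := LMh g gG gf.
  have emg := LMu gLM hLM.
  exists (subst g), (mX mh), (mX mP); split.
  + by rewrite map_f // mem_filter gf gG.
  + exact: sLM.
  + rewrite -eP -eP'; split; first by apply: indep => //; case: PLM.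
    move=> c /supp_subst [m ms <-] ne.
    have ne' : m != mP by apply: contra ne => /eqP ->.
    case: PLM => _ /(_ m ms ne'); rewrite /prod_order => /orP[//|/andP[e _]].
    by rewrite e in ne.
  + by move: le; rewrite emg lem_mXmt => /andP[].
- move=> g /memT [h [-> hG hf]]; have [mh [hLM ht sLM c1]] := LMh h hG hf.
  split; first by exists (mX mh).
  move=> g' mg' /memT [h' [-> h'G h'f]] ne g'LM m msupp.
  have [mh' [h'LM ht' s'LM _]] := LMh h' h'G h'f.
  rewrite (LMu1 g'LM s'LM).
  have [m0 m0s <-] := supp_subst msupp.
  have hne : h' != h by apply: contra ne => /eqP ->.
  apply/negP => le; have [_ H] := Gred hG; have := H h' mh' h'G hne h'LM m0 m0s.
  by rewrite lem_mXmt ht' le.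
Qed.

End Main.

End Aux.
Import Aux.

Theorem theorem5p1
  (alpha : algC) (f : {poly rat})
  (f_monic : f \is monic)
  (f_root : root (map_poly ratr f) alpha)
  (f_min : forall q : {poly rat}, root (map_poly ratr q) alpha -> f %| q)
  (n : nat) (lt1 : rel 'X_{1..n}) (lt1_order : monomial_order lt1)
  (gs : seq {mpoly rat[n.+1]})
  (Gt : seq {mpoly rat[n.+1]})
  (Gt_red : is_reduced_groebner (prod_order lt1) (fun _ => True)
              (in_ideal (fun _ => True) (rcons gs (poly_in_t n f))) Gt) :
  is_reduced_groebner lt1 (in_Qadj alpha)
    (in_ideal (in_Qadj alpha) (map (subst_t alpha) gs))
    (map (subst_t alpha) [seq g <- Gt | g != poly_in_t n f]).
Proof. exact: (Aux.main_thm f_monic f_root f_min lt1_order Gt_red). Qed.
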